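(* Let $P^v_i$ ($i=1,\dots,n$, $v\in\mathbb{R}^n$) be the extremal polynomials of the free nilpotent Lie group of rank $r\ge2$ and step $s\ge2$ with respect to a Hall–Grayson–Grossman basis $X_1,\dots,X_n$. Then: (i) if $i,\ell\in\{1,\dots,n\}$ satisfy $i\prec\ell$ and $v_\ell\neq0$, then $P^v_i$ is not the zero polynomial; (ii) if $v\in\mathbb{R}^n$ is such that $P^v_i=0$ (as a polynomial) for all $i=1,\dots,r$, then $v=0$; (iii) for all $i=1,\dots,n$ and $v\in\mathbb{R}^n$, $P^v_i(0)=v_i$.
   Context: Multi-indices $\mathcal I=\mathbb{N}^n$ with $|\alpha|$, $\alpha!$, $x^\alpha$. Hall basis of the free nilpotent Lie algebra $\mathfrak g$ (rank $r$, step $s$, dimension $n$): start from a basis $X_1,\dots,X_r$ of the first layer (degree 1); inductively the degree-$d$ elements are brackets $[X_i,X_j]$ of earlier elements with $i>j$, $d(i)+d(j)=d$, and, if $X_i$ was constructed as $[X_h,X_k]$, then $k\le j$; list them after lower-degree elements. Strings: $(\ell)$ for $\ell\le r$; for $X_\ell=[X_a,X_b]$, the string of $a$ followed by $b$. With string $(\ell_0,\dots,\ell_h)$, $I(\ell)_j=\#\{1\le p\le h:\ell_p=j\}$; $j\prec\ell$ iff the string of $j$ is an initial segment of that of $\ell$. $[Y,X_\alpha]$ is the left-nested bracket of $Y$ with $X_1$ ($\alpha_1$ times), ..., $X_n$ ($\alpha_n$ times), $[Y,X_0]=Y$. Realization on $\mathbb{R}^n$: $X_i=\sum_{\ell:\,i\prec\ell}\frac{(-1)^{|I(\ell)|}}{I(\ell)!}x^{I(\ell)}\partial_{x_\ell}$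 ($i\le r$), and $X_\ell=[X_a,X_b]$ for $\ell>r$ constructed as $[X_a,X_b]$; these form a Lie algebra of vector fields isomorphic to $\mathfrak g$. Generalized structure constants $c^k_{i\alpha}$: $[X_i,X_\alpha]=\sum_kc^k_{i\alpha}X_k$. Extremal polynomials: $P^v_i(x)=\sum_{\alpha\in\mathcal I}\frac{(-1)^{|\alpha|}}{\alpha!}\big(\sum_kc^k_{i\alpha}v_k\big)x^\alpha$. *)

(* Defs.v *)
From mathcomp Require Import all_boot all_order all_algebra.
From mathcomp Require Import reals.
From mathcomp Require Import mpoly.
Set Implicit Arguments. Unset Strict Implicit. Unset Printing Implicit Defensive.
Import Order.TTheory GRing.Theory Num.Theory.
Local Open Scope ring_scope.

(* Indices are 0-based: the basis is X_0, ..., X_{n-1} ('I_n); the first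
   layer (generators) consists of the indices l < r.
   A Hall basis is described by
     hb  : 'I_n -> option ('I_n * 'I_n)
           None for a generator, Some (a, b) when X_l = [X_a, X_b];
     deg : 'I_n -> nat   the degree of each element. *)

Definition HallBasis (r s n : nat) (hb : 'I_n -> option ('I_n * 'I_n))
  (deg : 'I_n -> nat) : Prop :=
  (r <= n)%N /\
      (forall l : 'I_n, (l < r)%N <-> hb l = None) /\
      (forall l : 'I_n, (l < r)%N -> deg l = 1%N) /\
      (forall (l a b : 'I_n), hb l = Some (a, b) ->
         [/\ (b < a)%N, (a < l)%N, deg l = (deg a + deg b)%N &
             forall h k : 'I_n, hb a = Some (h, k) -> (k <= b)%N]) /\
      (forall l l' : 'I_n, (l <= l')%N -> (deg l <= deg l')%N) /\
      (forall l : 'I_n, (deg l <= s)%N) /\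
      (forall a b : 'I_n, (b < a)%N -> (deg a + deg b <= s)%N ->
         (forall h k : 'I_n, hb a = Some (h, k) -> (k <= b)%N) ->
         exists l : 'I_n, hb l = Some (a, b)) /\
      (forall l l' : 'I_n, (r <= l)%N -> hb l = hb l' -> l = l').

Arguments HallBasis r s n hb deg : clear implicits.

Section HallRealization.
Variables (R : realType) (n : nat) (hb : 'I_n -> option ('I_n * 'I_n)).

(* string of an index: (l) for a generator, string(a) ++ [b] for [X_a,X_b];
   the recursion is well founded since a < l, implemented with fuel n. *)
Fixpoint hstring_fuel (fuel : nat) (l : 'I_n) : seq 'I_n :=
  match fuel with
  | 0 => [:: l]
  | f.+1 => match hb l with
            | None => [:: l]
            | Some (a, b) => rcons (hstring_fuel f a) b
            end
  end.
Definition hstring (l : 'I_n) : seq 'I_n := hstring_fuel n l.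

Definition Iidx (l : 'I_n) : 'X_{1..n} :=
  [multinom count_mem j (behead (hstring l)) | j < n].

Definition hprec (j l : 'I_n) : bool := prefix (hstring j) (hstring l).

Definition mfact (a : 'X_{1..n}) : nat := (\prod_(j < n) (a j)`!)%N.

(* polynomial vector fields on R^n: component l is the coefficient of d/dx_l *)
Definition vfield := 'I_n -> {mpoly R[n]}.

Definition vbr (X Y : vfield) : vfield :=
  fun k => \sum_(j < n) (X j * (Y k)^`M(j) - Y j * (X k)^`M(j)).

Definition genfield (i : 'I_n) : vfield :=
  fun l => if hprec i l then
             ((-1) ^+ mdeg (Iidx l) / (mfact (Iidx l))%:R) *: 'X_[Iidx l]
           else 0.

Fixpoint hfield_fuel (fuel : nat) (l : 'I_n) : vfield :=
  match fuel with
  | 0 => genfield l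
  | f.+1 => match hb l with
            | None => genfield l
            | Some (a, b) => vbr (hfield_fuel f a) (hfield_fuel f b)
            end
  end.
Definition hfield (l : 'I_n) : vfield := hfield_fuel n l.

(* [Y, X_alpha]: left-nested bracket with X_1 (alpha_1 times), ..., X_n *)
Definition nested (Y : vfield) (alpha : 'X_{1..n}) : vfield :=
  foldl (fun Z j => iter (alpha j) (fun W => vbr W (hfield j)) Z) Y (enum 'I_n).

Definition gen_struct_const (c : 'I_n -> 'X_{1..n} -> 'I_n -> R) : Prop :=
  forall (i : 'I_n) (alpha : 'X_{1..n}),
    nested (hfield i) alpha = (fun l => \sum_(k < n) c i alpha k *: hfield k l).

(* coefficient of x^alpha in the extremal polynomial P^v_i *)
Definition Pcoef (c : 'I_n -> 'X_{1..n} -> 'I_n -> R) (v : 'I_n -> R)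
  (i : 'I_n) (alpha : 'X_{1..n}) : R :=
  (-1) ^+ mdeg alpha / (mfact alpha)%:R * \sum_(k < n) c i alpha k * v k.

End HallRealization.

(* Main.v *)
Require Import Defs.
From mathcomp Require Import all_boot all_order all_algebra.
From mathcomp Require Import reals.
From mathcomp Require Import mpoly.
From Stdlib Require Import FunctionalExtensionality.
Set Implicit Arguments. Unset Strict Implicit. Unset Printing Implicit Defensive.
Import Order.TTheory GRing.Theory Num.Theory.
Local Open Scope ring_scope.

Lemma ord_ind n (P : 'I_n -> Prop) :
  (forall l : 'I_n, (forall a : 'I_n, (a < l)%N -> P a) -> P l) -> forall l, P l.
Proof.
move=> IH l; have [k lk] := ubnP l; elim: k l lk => // k IHk l lk.
by apply: IH => a al; apply: IHk; exact: leq_trans al lk.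
Qed.

Lemma str_nil n (h : 'I_n -> option ('I_n * 'I_n)) f l : hstring_fuel h f l <> [::].
Proof.
by case: f => [|f] //=; case: (h l) => [[a b]|] //; case: (hstring_fuel h f a).
Qed.

Section Model.
Variables (n : nat) (h : 'I_n -> option ('I_n * 'I_n)) (act : pred 'I_n).
Hypothesis M1 : forall l a b, act l -> h l = Some (a, b) ->
  [/\ act a, act b, (b < a)%N & (a < l)%N].
Hypothesis M2 : forall l a b h1 k, act l -> h l = Some (a, b) ->
  h a = Some (h1, k) -> (k <= b)%N.
Hypothesis M3 : forall l l', act l -> act l' -> h l != None -> h l = h l' -> l = l'.

Lemma str_fuel f1 f2 l : act l -> (l < f1)%N -> (l < f2)%N ->
  hstring_fuel h f1 l = hstring_fuel h f2 l.
Proof.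
elim: f1 f2 l => [|f IH] [|g] l al //= lf lg.
case E: (h l) => [[a b]|] //; have [aa _ _ al'] := M1 al E.
by rewrite (IH g a aa) ?(leq_trans al') .
Qed.

Lemma strE l : act l -> hstring h l =
  match h l with None => [:: l] | Some (a, b) => rcons (hstring h a) b end.
Proof.
move=> al; have n0 : (0 < n)%N := leq_ltn_trans (leq0n l) (ltn_ord l).
rewrite /hstring.
have -> : hstring_fuel h n l = hstring_fuel h n.-1.+1 l by apply: str_fuel; rewrite ?prednK.
rewrite /=; case E: (h l) => [[a b]|] //.
have [aa _ _ al'] := M1 al E.
have an : (a < n.-1)%N by rewrite -ltnS prednK // (leq_ltn_trans al' (ltn_ord l)).
by rewrite (@str_fuel n n.-1).
Qed.


Lemma str_letter l : act l -> h l = None -> hstring h l = [:: l].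
Proof. by move=> al E; rewrite strE // E. Qed.

Lemma str_rcons l a b : act l -> h l = Some (a, b) -> hstring h l = rcons (hstring h a) b.
Proof. by move=> al E; rewrite strE // E. Qed.

Lemma str_shape l : act l -> h l <> None ->
  exists c b1 t, hstring h l = [:: c, b1 & t] /\ (b1 < c)%N /\ act b1.
Proof.
elim/ord_ind: l => l IH al; case E: (h l) => [[a b]|] // _.
have [aa ab ba al'] := M1 al E; rewrite (str_rcons al E).
case Ea: (h a) => [[a1 b1]|].
  have [|c [b2 [t [-> [lt ab2]]]]] := IH a al' aa; first by rewrite Ea.
  by exists c, b2, (rcons t b).
by rewrite (str_letter aa Ea); exists a, b, [::].
Qed.

Lemma str_head l : act l -> exists c t, hstring h l = c :: t /\ h c = None /\ act c.
Proof.
elim/ord_ind: l => l IH al; case E: (h l) => [[a b]|].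
  have [aa ab ba al'] := M1 al E; rewrite (str_rcons al E).
  have [c [t [-> [hc ac]]]] := IH a al' aa.
  by exists c, (rcons t b).
by exists l, [::]; rewrite (str_letter al E).
Qed.

Lemma str_inj l l' : act l -> act l' -> hstring h l = hstring h l' -> l = l'.
Proof.
elim/ord_ind: l l' => l IH l' al al'.
case E: (h l) => [[a b]|]; case E': (h l') => [[a' b']|].
- rewrite (str_rcons al E) (str_rcons al' E') => /rcons_inj [ea eb].
  have [aa _ _ lt] := M1 al E; have [aa' _ _ _] := M1 al' E'.
  have ea' := IH a lt a' aa aa' ea; subst a' b'.
  by apply: M3 => //; rewrite ?E ?E'.
- rewrite (str_rcons al E) (str_letter al' E') => /(congr1 size).
  rewrite size_rcons /=; have := @str_nil _ h n a.
  by rewrite /hstring; case: (hstring_fuel h n a).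
- rewrite (str_letter al E) (str_rcons al' E') => /(congr1 size).
  rewrite size_rcons /=; have := @str_nil _ h n a'.
  by rewrite /hstring; case: (hstring_fuel h n a').
- by rewrite (str_letter al E) (str_letter al' E') => -[].
Qed.

End Model.

Definition genA (R : realType) n (h : 'I_n -> option ('I_n * 'I_n)) (act : pred 'I_n)
  (i : 'I_n) : vfield R n := fun k => if act k then genfield R h i k else 0.

Fixpoint FA (R : realType) n (h : 'I_n -> option ('I_n * 'I_n)) (act : pred 'I_n)
  (f : nat) (l : 'I_n) : vfield R n :=
  match f with
  | 0 => genA R h act l
  | f'.+1 => match h l with
             | None => genA R h act l
             | Some (a, b) => vbr (FA R h act f' a) (FA R h act f' b)
             end
  end.

Definition FF (R : realType) n h act (l : 'I_n) := FA R h act n l.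

Lemma mfact0 n : mfact (0%MM : 'X_{1..n}) = 1%N.
Proof. by rewrite /mfact big1 // => i _; rewrite mnm0E. Qed.

Section Fields.
Variables (R : realType) (n : nat) (h : 'I_n -> option ('I_n * 'I_n)) (act : pred 'I_n).
Hypothesis M1 : forall l a b, act l -> h l = Some (a, b) ->
  [/\ act a, act b, (b < a)%N & (a < l)%N].

Local Notation F := (FF R h act).

Lemma FA_fuel f1 f2 l : act l -> (l < f1)%N -> (l < f2)%N ->
  FA R h act f1 l = FA R h act f2 l.
Proof.
elim: f1 f2 l => [|f IH] [|g] l al //= lf lg.
case E: (h l) => [[a b]|] //; have [aa ab ba al'] := M1 al E.
by rewrite (IH g a aa) ?(leq_trans al') // (IH g b ab) // ?(leq_trans (ltn_trans ba al')).
Qed.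

Lemma FE l : act l -> F l =
  match h l with None => genA R h act l | Some (a, b) => vbr (F a) (F b) end.
Proof.
move=> al; have n0 : (0 < n)%N := leq_ltn_trans (leq0n l) (ltn_ord l).
rewrite /FF.
have -> : FA R h act n l = FA R h act n.-1.+1 l by apply: FA_fuel; rewrite ?prednK.
rewrite /=; case E: (h l) => [[a b]|] //.
have [aa ab ba al'] := M1 al E.
have an : (a < n.-1)%N by rewrite -ltnS prednK // (leq_ltn_trans al' (ltn_ord l)).
have bn : (b < n.-1)%N by apply: ltn_trans an.
by rewrite (@FA_fuel n n.-1 a) // (@FA_fuel n n.-1 b).
Qed.

Lemma Iidx_letter l : act l -> h l = None -> Iidx h l = 0%MM.
Proof.
by move=> al E; apply/mnmP => j; rewrite /Iidx (str_letter M1 al E) !mnmE.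
Qed.

Section Min.
Variables (m0 : 'I_n).
Hypotheses (Hm0 : act m0) (Hmin : forall k, act k -> (m0 <= k)%N).

Lemma hm0 : h m0 = None.
Proof.
case E: (h m0) => [[a b]|] //; have [_ ab ba al] := M1 Hm0 E.
by have := Hmin ab; rewrite leqNgt (ltn_trans ba al).
Qed.

Lemma prec_m0 k : act k -> hprec h m0 k = (k == m0).
Proof.
move=> ak; rewrite /hprec (str_letter M1 Hm0 hm0).
case E: (h k) => [[a b]|].
  have [|c [b1 [t [-> [lt ab1]]]]] := str_shape M1 ak; first by rewrite E.
  rewrite prefix_cons prefix0s andbT.
  apply/idP/idP => [/eqP ec|/eqP ekm]; last by rewrite ekm hm0 in E.
  by move: lt; rewrite -ec => lt; have := Hmin ab1; rewrite leqNgt lt.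
by rewrite (str_letter M1 ak E) prefix_cons prefix0s andbT eq_sym.
Qed.

Lemma Fm0 k : F m0 k = ((k == m0)%:R)%:MP.
Proof.
rewrite (FE Hm0) hm0 /genA.
case ak: (act k); last first.
  by case: eqP ak => [->|]; rewrite ?Hm0 // => _ _; rewrite mulr0n mpolyC0.
rewrite /genfield prec_m0 //; case: eqP => [->|]; last by rewrite mulr0n mpolyC0.
rewrite (Iidx_letter Hm0 hm0) mdeg0 mfact0 expr0 divr1 mpolyX0 scale1r.
by rewrite mulr1n mpolyC1.
Qed.

Lemma F_m0 l : act l -> F l m0 = ((l == m0)%:R)%:MP.
Proof.
elim/ord_ind: l => l IH al.
have [->|lm] := eqVneq l m0; first by rewrite Fm0 eqxx.
rewrite (FE al); case E: (h l) => [[a b]|].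
  have [aa ab ba al'] := M1 al E.
  rewrite /vbr big1 ?mulr0n ?mpolyC0 // => j _.
  rewrite (IH a al' aa) (IH b (ltn_trans ba al') ab) !mderivC.
  by rewrite !mulr0 subrr.
rewrite /genA Hm0 /genfield /hprec (str_letter M1 al E) (str_letter M1 Hm0 hm0).
by rewrite prefix_cons prefix0s andbT (negbTE lm) mulr0n mpolyC0.
Qed.

Lemma vbr_m0 (X : vfield R n) k : vbr X (F m0) k = - (X k)^`M(m0).
Proof.
rewrite /vbr (bigD1 m0) //= big1 => [|j jm].
  by rewrite Fm0 mderivC mulr0 Fm0 eqxx mulr1n mpolyC1 mul1r sub0r addr0.
by rewrite Fm0 mderivC mulr0 Fm0 (negbTE jm) mulr0n mpolyC0 mul0r subrr.
Qed.

End Min.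
End Fields.

From mathcomp Require Import ring.

Lemma rcons_nseq T p (x : T) : rcons (nseq p x) x = nseq p.+1 x.
Proof. by elim: p => //= p ->. Qed.

Lemma mfact_gt0 n (J : 'X_{1..n}) : (0 < mfact J)%N.
Proof. by rewrite /mfact prodn_gt0 // => i; rewrite fact_gt0. Qed.

Lemma deriv_mono (R : realType) n (J : 'X_{1..n}) (i : 'I_n) : (0 < J i)%N ->
  - ((((-1) ^+ mdeg J / (mfact J)%:R) : R) *: ('X_[J] : {mpoly R[n]}))^`M(i) =
  ((-1) ^+ mdeg (J - U_(i)) / (mfact (J - U_(i)))%:R) *: 'X_[J - U_(i)].
Proof.
move=> Ji; set J' := (J - U_(i))%MM.
have EJ : J = (J' + U_(i))%MM.
  apply/mnmP => j; rewrite mnmDE mnmBE mnm1E.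
  by have [<-|_] := eqVneq i j; rewrite ?subn0 ?addn0 // subnK.
have Jd : mdeg J = (mdeg J').+1 by rewrite {1}EJ mdegD mdeg1 addn1.
have Jf : mfact J = (J i * mfact J')%N.
  rewrite /mfact (bigD1 i) //= [in RHS](bigD1 i) //=.
  have -> : \prod_(j < n | j != i) (J' j)`! = \prod_(j < n | j != i) (J j)`!.
    by apply: eq_bigr => j ji; rewrite /J' mnmBE mnm1E eq_sym (negbTE ji) subn0.
  rewrite /J' mnmBE mnm1E eqxx; move: Ji; case: (J i) => // q _.
  by rewrite subn1 factS mulnA.
rewrite mderivZ mderivX -/J' scalerA -scaleNr; congr (_ *: _).
rewrite Jd Jf exprS natrM.
have h1 : ((J i)%:R : R) != 0 by rewrite pnatr_eq0 -lt0n.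
have h2 : ((mfact J')%:R : R) != 0 by rewrite pnatr_eq0 -lt0n mfact_gt0.
field; by rewrite h1 h2.
Qed.

Section Elim.
Variables (R : realType) (n : nat) (h : 'I_n -> option ('I_n * 'I_n)) (act : pred 'I_n).
Hypothesis M1 : forall l a b, act l -> h l = Some (a, b) ->
  [/\ act a, act b, (b < a)%N & (a < l)%N].
Hypothesis M2 : forall l a b h1 k, act l -> h l = Some (a, b) ->
  h a = Some (h1, k) -> (k <= b)%N.
Hypothesis M3 : forall l l', act l -> act l' -> h l != None -> h l = h l' -> l = l'.
Variables (m0 : 'I_n).
Hypotheses (Hm0 : act m0) (Hmin : forall k, act k -> (m0 <= k)%N).

Definition h' (l : 'I_n) : option ('I_n * 'I_n) :=
  match h l with Some (a, b) => if b == m0 then None else Some (a, b) | None => None end.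
Definition act' : pred 'I_n := fun l => act l && (l != m0).

Lemma h'_some l a b : h' l = Some (a, b) -> h l = Some (a, b) /\ b != m0.
Proof. by rewrite /h'; case: (h l) => [[x y]|] //; case: eqP => // yn [<- <-]; split=> //; apply/eqP. Qed.

Lemma h'_none l : h' l = None -> h l = None \/ exists a, h l = Some (a, m0).
Proof.
rewrite /h'; case: (h l) => [[x y]|]; last by left.
by case: eqP => // -> _; right; exists x.
Qed.

Lemma M1' l a b : act' l -> h' l = Some (a, b) ->
  [/\ act' a, act' b, (b < a)%N & (a < l)%N].
Proof.
move=> /andP [al lm] /h'_some [E bm]; have [aa ab ba al'] := M1 al E.
split=> //; rewrite /act' ?aa ?ab ?bm //=.
by apply/eqP => am; have := Hmin ab; rewrite -am leqNgt ba.
Qed.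

Lemma M2' l a b h1 k : act' l -> h' l = Some (a, b) ->
  h' a = Some (h1, k) -> (k <= b)%N.
Proof.
move=> /andP [al _] /h'_some [E _] /h'_some [Ea _]; exact: M2 al E Ea.
Qed.

Lemma M3' l l' : act' l -> act' l' -> h' l != None -> h' l = h' l' -> l = l'.
Proof.
move=> /andP [al _] /andP [al' _]; case E: (h' l) => [[a b]|] // _ E'.
have [El _] := h'_some E; have [El' _] := h'_some (esym E').
by apply: M3 => //; rewrite El ?El'.
Qed.

Local Notation F := (FF R h act).
Local Notation F' := (FF R h' act').

Definition subm (I : 'X_{1..n}) (m : nat) : 'X_{1..n} :=
  [multinom (if j == m0 then (I j - m)%N else I j) | j < n].

Definition G (c : 'I_n) (m : nat) (k : 'I_n) : {mpoly R[n]} :=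
  if act k && hprec h c k && (m <= Iidx h k m0)%N then
    ((-1) ^+ mdeg (subm (Iidx h k) m) / (mfact (subm (Iidx h k) m))%:R) *:
      'X_[subm (Iidx h k) m]
  else 0.

Lemma G_deriv c m k : - (G c m k)^`M(m0) = G c m.+1 k.
Proof.
rewrite /G; case: (act k && hprec h c k) => /=; last by rewrite mderiv0 oppr0.
set I := Iidx h k.
have [lt|gt|eq] := ltngtP m (I m0).
- rewrite deriv_mono; last by rewrite mnmE eqxx subn_gt0.
  have -> // : (subm I m - U_(m0))%MM = subm I m.+1.
  apply/mnmP => j; rewrite mnmBE !mnmE eq_sym.
  by case: eqP => _; rewrite ?subn0 // subnS subn1.
- by rewrite mderiv0 oppr0.
- rewrite mderivZ mderivX mnmE eqxx eq subnn scale0r scaler0.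
  by rewrite oppr0.
Qed.

Lemma Bletter b : act' b -> h' b = None ->
  exists c p, [/\ h c = None, act c, c != m0,
    hstring h b = c :: nseq p m0 & forall k, F b k = G c p k].
Proof.
elim/ord_ind: b => b IH /andP [ab bm] E'.
case E: (h b) => [[a b1]|].
- have [aa ab1 ba al] := M1 ab E.
  have b1m : b1 = m0.
    by move: E'; rewrite /h' E; case: eqP.
  subst b1.
  have am : a != m0 by apply/eqP => am; rewrite am ltnn in ba.
  have Ea' : h' a = None.
    rewrite /h'; case Ea: (h a) => [[a1 k1]|] //.
    have [_ ak1 _ _] := M1 aa Ea.
    have km : k1 = m0.
      by apply: val_inj; apply/eqP; rewrite eqn_leq (M2 ab E Ea) Hmin.
    by rewrite km eqxx.
  have [c [p [hc ac cm sa Fa]]] := IH a al (introT andP (conj aa am)) Ea'.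
  exists c, p.+1; split=> //.
    by rewrite (str_rcons M1 ab E) sa rcons_cons rcons_nseq.
  by move=> k; rewrite (FE R M1 ab) E (vbr_m0 M1 Hm0 Hmin) Fa G_deriv.
- exists b, 0%N; split=> //; first by rewrite (str_letter M1 ab E).
  move=> k; rewrite (FE R M1 ab) E /genA /G /genfield.
  case: (act k) => //=; case: (hprec h b k) => //=.
  have -> // : subm (Iidx h k) 0 = Iidx h k.
  by apply/mnmP => j; rewrite mnmE; case: eqP => // _; rewrite subn0.
Qed.


Definition rt : n.-tuple {mpoly R[n]} :=
  [tuple (if i == m0 then 0 else 'X_i) | i < n].
Definition rho (p : {mpoly R[n]}) : {mpoly R[n]} := p \mPo rt.

Lemma rhoX (m : 'X_{1..n}) :
  rho 'X_[m] = if (m m0 == 0)%N then 'X_[m] else 0.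
Proof.
rewrite /rho comp_mpolyX [in RHS]mpolyXE_id.
case: eqP => [m00|mn0].
  apply: eq_bigr => i _; rewrite tnth_mktuple; case: eqP => // ->.
  by rewrite m00 !expr0.
rewrite (bigD1 m0) //= tnth_mktuple eqxx expr0n.
by move/eqP/negbTE: mn0 => ->; rewrite mul0r.
Qed.

Lemma rhoC c : rho c%:MP = c%:MP.
Proof. exact: comp_mpolyC. Qed.

Lemma rho0 : rho 0 = 0.
Proof. exact: comp_mpoly0. Qed.

Lemma rhoB p q : rho (p - q) = rho p - rho q.
Proof. exact: comp_mpolyB. Qed.

Lemma rhoM p q : rho (p * q) = rho p * rho q.
Proof. by rewrite /rho rmorphM. Qed.

Lemma rhoZ c p : rho (c *: p) = c *: rho p.
Proof. exact: comp_mpolyZ. Qed.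

Lemma rho_sum (I : Type) (s : seq I) (f : I -> {mpoly R[n]}) :
  rho (\sum_(i <- s) f i) = \sum_(i <- s) rho (f i).
Proof. by rewrite /rho raddf_sum. Qed.

Lemma rhoD p q : rho (p + q) = rho p + rho q.
Proof. exact: comp_mpolyD. Qed.

Lemma rho_deriv j p : j != m0 -> rho (p^`M(j)) = (rho p)^`M(j).
Proof.
move=> jm; elim/mpolyind: p => [|c m p _ _ IH].
  by rewrite mderiv0 rho0 mderiv0.
rewrite mderivD !rhoD mderivD IH; congr (_ + _).
rewrite mderivZ !rhoZ mderivZ mderivX rhoZ !rhoX.
have -> : ((m - U_(j))%MM m0 = m m0)%N by rewrite mnmBE mnm1E (negbTE jm) subn0.
by case: eqP => _; rewrite ?mderivX ?mderiv0 ?scaler0.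
Qed.

Lemma rho_coef0 p : (rho p)@_0 = p@_0.
Proof.
elim/mpolyind: p => [|c m p _ _ IH]; first by rewrite rho0.
rewrite rhoD !mcoeffD IH rhoZ !mcoeffZ rhoX; congr (_ * _ + _).
case: eqP => // mn0.
rewrite mcoeff0 mcoeffX; case: eqP => // em.
by move: mn0; rewrite em mnm0E.
Qed.

Lemma rho_sumI (f : 'I_n -> {mpoly R[n]}) :
  rho (\sum_(j < n) f j) = \sum_(j < n) rho (f j).
Proof. by rewrite /rho raddf_sum. Qed.

Lemma decomp k : act' k -> exists b t, [/\ act' b, h' b = None,
  hstring h' k = b :: t, hstring h k = hstring h b ++ t & m0 \notin t].
Proof.
elim/ord_ind: k => k IH ak; move/andP: (ak) => [akk km].
case E': (h' k) => [[a b]|].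
- have [aa ab ba al] := M1' ak E'; have [E bm] := h'_some E'.
  have [b0 [t [ab0 hb0 s' s ntm]]] := IH a al aa.
  exists b0, (rcons t b); split => //.
  + by rewrite (str_rcons M1' ak E') s'.
  + by rewrite (str_rcons M1 akk E) s rcons_cat.
  + by rewrite mem_rcons in_cons negb_or eq_sym bm.
- exists k, [::]; split => //; first by rewrite (str_letter M1' ak E').
  by rewrite cats0.
Qed.

Lemma comb l c p k : act' l -> h' l = None -> h c = None -> act c -> c != m0 ->
  hstring h l = c :: nseq p m0 -> rho (G c p k) = genA R h' act' l k.
Proof.
move=> al E' hc ac cm sl; move/andP: (al) => [all lm].
rewrite /genA /G.
case ak: (act k) => /=; last first.
  have -> : act' k = false by rewrite /act' ak.
  by rewrite rho0.
have [->|km] := eqVneq k m0.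
  have -> : act' m0 = false by rewrite /act' eqxx andbF.
  rewrite /hprec (str_letter M1 ac hc) (str_letter M1 Hm0 (hm0 M1 Hm0 Hmin)).
  by rewrite prefix_cons prefix0s andbT (negbTE cm) /= rho0.
have ak' : act' k by rewrite /act' ak km.
rewrite ak' /=.
have [b [t [ab hb s' s ntm]]] := decomp ak'.
have [c' [p' [hc' ac' cm' sb _]]] := Bletter ab hb.
have ct0 : count_mem m0 t = 0%N by apply/count_memPn.
have I0 : Iidx h k m0 = p'.
  by rewrite /Iidx s sb mnmE /= count_cat count_nseq /= eqxx mul1n ct0 addn0.
have II' : subm (Iidx h k) p' = Iidx h' k.
  apply/mnmP => j; rewrite /Iidx s sb s' !mnmE /= count_cat count_nseq /=.
  case: eqP => [->|jm]; first by rewrite eqxx mul1n ct0 addn0 subnn.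
  by rewrite eq_sym; move/eqP/negbTE: jm => ->; rewrite mul0n add0n.
have I'0 : Iidx h' k m0 = 0%N by rewrite /Iidx s' mnmE /= ct0.
have Pc : hprec h c k = (c == c').
  by rewrite /hprec (str_letter M1 ac hc) s sb cat_cons prefix_cons prefix0s andbT.
have Pl : hprec h' l k = (l == b).
  by rewrite /hprec (str_letter M1' al E') s' prefix_cons prefix0s andbT.
have key : (l == b) = (c == c') && (p == p').
  apply/eqP/andP => [lb|[/eqP cc /eqP pp]].
    move: sl; rewrite lb sb => -[-> /(congr1 size)]; rewrite !size_nseq => ->.
    by split.
  apply: (str_inj M1 M3) => //; first by move/andP: ab => [].
  by rewrite sl sb cc pp.
rewrite /genfield Pc Pl key I0.
case: eqP => [cc|] /=; last by rewrite rho0.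
have [lt|gt|eq] := ltngtP p p'.
- rewrite rhoZ rhoX mnmE eqxx I0.
  by have := lt; rewrite -subn_gt0 lt0n => /negbTE ->; rewrite scaler0.
- by rewrite rho0.
- rewrite eq II' rhoZ rhoX I'0 eqxx; done.
Qed.

Lemma elim_F l : act' l -> forall k, rho (F l k) = F' l k.
Proof.
elim/ord_ind: l => l IH al k; move/andP: (al) => [all lm].
case E': (h' l) => [[a b]|].
- have [aa ab ba al'] := M1' al E'; have [E bm] := h'_some E'.
  have am : a != m0 by move/andP: aa => [].
  rewrite (FE R M1 all) E (FE R M1' al) E' /vbr rho_sumI.
  apply: eq_bigr => j _; rewrite rhoB !rhoM.
  rewrite -!(IH a al' aa) -!(IH b (ltn_trans ba al') ab).
  have [->|jm] := eqVneq j m0; last by rewrite !rho_deriv.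
  have [aa1 _] := andP aa; have [ab1 _] := andP ab.
  rewrite (F_m0 R M1 Hm0 Hmin aa1) (F_m0 R M1 Hm0 Hmin ab1) (negbTE am) (negbTE bm).
  by rewrite mulr0n mpolyC0 rho0 !mul0r.
- have [c [p [hc ac cm sl Fl]]] := Bletter al E'.
  by rewrite Fl (@comb l c p k al E' hc ac cm sl) (FE R M1' al) E'.
Qed.

End Elim.



Lemma mcoeffC0 (R : realType) n (c : R) : (c%:MP : {mpoly R[n]})@_0 = c.
Proof. by rewrite mcoeffC eqxx mulr1. Qed.

Lemma const_terms (R : realType) n N : forall (h : 'I_n -> option ('I_n * 'I_n))
  (act : pred 'I_n), (#|act| <= N)%N ->
  (forall l a b, act l -> h l = Some (a, b) -> [/\ act a, act b, (b < a)%N & (a < l)%N]) ->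
  (forall l a b h1 k, act l -> h l = Some (a, b) -> h a = Some (h1, k) -> (k <= b)%N) ->
  (forall l l', act l -> act l' -> h l != None -> h l = h l' -> l = l') ->
  forall l k, act l -> (FF R h act l k)@_0 = (l == k)%:R.
Proof.
elim: N => [|N IH] h act Hc M1 M2 M3 l k al.
  have : (0 < #|act|)%N by apply/card_gt0P; exists l.
  by rewrite ltnNge Hc.
case: (arg_minnP (fun i : 'I_n => val i) al) => m0 Hm0 Hmin0.
have Hmin : forall j, act j -> (m0 <= j)%N := Hmin0.
have [->|lm] := eqVneq l m0.
  by rewrite (Fm0 R M1 Hm0 Hmin) mcoeffC0 eq_sym.
have [->|km] := eqVneq k m0.
  by rewrite (F_m0 R M1 Hm0 Hmin al) mcoeffC0 (negbTE lm).
have al' : act' act m0 l by rewrite /act' al lm.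
rewrite -(rho_coef0 m0) (elim_F R M1 M2 M3 Hm0 Hmin al').
apply: IH => //.
- have := cardD1 m0 act; rewrite [m0 \in act]Hm0 add1n => E.
  have -> : #|act' act m0| = #|[predD1 act & m0]|.
    by apply: eq_card => x; rewrite !inE /act' andbC.
  by rewrite -ltnS -E.
- move=> l1 a1 b1 H1 H2; exact: (M1' M1 Hmin H1 H2).
- move=> l1 a1 b1 c1 d1 H1 H2 H3; exact: (M2' M2 H1 H2 H3).
- move=> l1 l2 H1 H2 H3 H4; exact: (M3' M3 H1 H2 H3 H4).
Qed.

Lemma foldl_eq_in (T : Type) (S : eqType) (s : seq S) (f g : T -> S -> T) (z : T) :
  (forall j, j \in s -> f^~ j =1 g^~ j) -> foldl f z s = foldl g z s.
Proof.
elim: s z => //= j s IH z H; rewrite H ?inE ?eqxx //.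
by apply: IH => x xs; apply: H; rewrite inE xs orbT.
Qed.

Section Nested.
Variables (R : realType) (n : nat) (hb : 'I_n -> option ('I_n * 'I_n)).

Definition stepG (alpha : 'X_{1..n}) (Z : vfield R n) (j : 'I_n) : vfield R n :=
  iter (alpha j) (fun W => vbr W (hfield R hb j)) Z.

Lemma nestedE (Y : vfield R n) alpha : nested hb Y alpha = foldl (stepG alpha) Y (enum 'I_n).
Proof. by []. Qed.

Lemma foldl_triv (alpha : 'X_{1..n}) Z (s : seq 'I_n) :
  (forall j, j \in s -> alpha j = 0%N) -> foldl (stepG alpha) Z s = Z.
Proof.
elim: s Z => //= j s IH Z H; rewrite /stepG H ?inE ?eqxx //=.
by apply: IH => x xs; apply: H; rewrite inE xs orbT.
Qed.

Lemma nested0 (Y : vfield R n) : nested hb Y 0%MM = Y.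
Proof. by rewrite nestedE foldl_triv // => j _; rewrite mnm0E. Qed.

Lemma nested_step (Y : vfield R n) (alpha : 'X_{1..n}) (b : 'I_n) :
  (forall j : 'I_n, (b < j)%N -> alpha j = 0%N) ->
  nested hb Y (alpha + U_(b))%MM = vbr (nested hb Y alpha) (hfield R hb b).
Proof.
move=> Hz; rewrite !nestedE.
have bin : b \in enum 'I_n by rewrite mem_enum.
have sorted_enum : sorted (fun x y : 'I_n => (x < y)%N) (enum 'I_n).
  by have := iota_ltn_sorted 0 n; rewrite -val_enum_ord sorted_map.
have uq := enum_uniq 'I_n.
case/splitPr: bin sorted_enum uq => s1 s2 srt uq.
have gt2 : forall j, j \in s2 -> (b < j)%N.
  move: srt; rewrite sorted_pairwise ?pairwise_cat /=; last exact: ltn_trans.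
  by case/and4P => _ _ /allP H _.
have bs1 : b \notin s1.
  by move: uq; rewrite cat_uniq /= negb_or => /and3P [_ /andP [H _] _].
have t1 : forall Z, foldl (stepG alpha) Z s2 = Z.
  by move=> Z; apply: foldl_triv => j /gt2 /Hz.
have t2 : forall Z, foldl (stepG (alpha + U_(b))%MM) Z s2 = Z.
  move=> Z; apply: foldl_triv => j /gt2 bj; rewrite mnmDE mnm1E Hz //.
  by case: eqP => // eb; rewrite eb ltnn in bj.
rewrite !foldl_cat /= t1 t2.
rewrite /stepG mnmDE mnm1E eqxx addn1 iterS; congr (vbr _ _); congr iter.
apply: foldl_eq_in => j js Z.
rewrite /stepG mnmDE mnm1E; case: eqP => [ebj|]; last by rewrite addn0.
by move: bs1; rewrite ebj js.
Qed.

End Nested.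

Lemma prefix_rcons_lt (T : eqType) (u s : seq T) x :
  prefix u (rcons s x) -> u != rcons s x -> prefix u s.
Proof.
case/prefixP => s3; case/lastP: s3 => [|s3 y]; first by rewrite cats0 => ->; rewrite eqxx.
rewrite -rcons_cat => /rcons_inj [-> _] _; exact: prefix_prefix.
Qed.

Lemma hfield_FA (R : realType) n (hb : 'I_n -> option ('I_n * 'I_n)) f l :
  hfield_fuel R hb f l = FA R hb (fun _ => true) f l.
Proof.
elim: f l => [|f IH] l //=.
by case: (hb l) => [[a b]|] //; rewrite !IH.
Qed.

Section Main.
Variables (R : realType) (r s n : nat) (hb : 'I_n -> option ('I_n * 'I_n))
  (deg : 'I_n -> nat).
Hypothesis H : HallBasis r s n hb deg.

Let act : pred 'I_n := fun _ => true.

Lemma HM1 l a b : act l -> hb l = Some (a, b) -> [/\ act a, act b, (b < a)%N & (a < l)%N].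
Proof.
move: H => [_ [_ [_ [Hbr _]]]] _ E.
by have [] := Hbr l a b E.
Qed.

Lemma HM2 l a b h1 k : act l -> hb l = Some (a, b) -> hb a = Some (h1, k) -> (k <= b)%N.
Proof.
move: H => [_ [_ [_ [Hbr _]]]] _ E Ea.
by have [_ _ _ H4] := Hbr l a b E; exact: H4 _ _ Ea.
Qed.

Lemma HM3 l l' : act l -> act l' -> hb l != None -> hb l = hb l' -> l = l'.
Proof.
move: H => [_ [Hgen [_ [_ [_ [_ [_ Hinj]]]]]]] _ _ hl E; apply: Hinj E.
by rewrite leqNgt; apply/negP => /Hgen; apply/eqP.
Qed.

Lemma hfieldE l : hfield R hb l = FF R hb act l.
Proof. exact: hfield_FA. Qed.

Lemma hfield_br l a b : hb l = Some (a, b) ->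
  hfield R hb l = vbr (hfield R hb a) (hfield R hb b).
Proof. by move=> E; rewrite !hfieldE (FE R HM1 (isT : act l)) E. Qed.

Lemma hconst l k : (hfield R hb l k)@_0 = (l == k)%:R.
Proof.
rewrite hfieldE; apply: (@const_terms R n #|act|) => //.
- exact: HM1.
- exact: HM2.
- exact: HM3.
Qed.

Lemma coef_unique (V : vfield R n) (c : 'I_n -> R) :
  V = (fun l => \sum_(k < n) c k *: hfield R hb k l) -> forall m, c m = (V m)@_0.
Proof.
move=> -> m; rewrite raddf_sum (bigD1 m) //= big1 => [|j jm].
  by rewrite mcoeffZ hconst eqxx mulr1 addr0.
by rewrite mcoeffZ hconst (negbTE jm) mulr0.
Qed.

Lemma behead_le l a b : hb l = Some (a, b) ->
  forall x, x \in behead (hstring hb a) -> (x <= b)%N.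
Proof.
elim/ord_ind: a l b => a IH l b E x.
case Ea: (hb a) => [[a1 k1]|]; last by rewrite (str_letter HM1 (isT : act a) Ea).
have kb := HM2 (isT : act l) E Ea.
have [_ _ _ lt] := HM1 (isT : act a) Ea.
rewrite (str_rcons HM1 (isT : act a) Ea).
have := @str_nil _ hb n a1; rewrite -/(hstring hb a1).
case: (hstring hb a1) (IH a1 lt a k1 Ea) => // y t IH' _ /=.
rewrite mem_rcons in_cons => /orP [/eqP ->|xt] //.
by apply: leq_trans kb; apply: IH'.
Qed.

Lemma nest_prefix l i : prefix (hstring hb i) (hstring hb l) ->
  nested hb (hfield R hb i)
    [multinom count_mem j (drop (size (hstring hb i)) (hstring hb l)) | j < n] =
  hfield R hb l.
Proof.
elim/ord_ind: l i => l IH i P.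
have [eqs|neqs] := eqVneq (hstring hb i) (hstring hb l).
  have eil := str_inj HM1 HM3 (isT : act i) (isT : act l) eqs; subst i.
  rewrite drop_size.
  have -> : [multinom count_mem j ([::] : seq 'I_n) | j < n] = 0%MM.
    by apply/mnmP => j; rewrite !mnmE.
  by rewrite nested0.
case E: (hb l) => [[a b]|]; last first.
  move: P neqs; rewrite (str_letter HM1 (isT : act l) E) prefixs1.
  have := @str_nil _ hb n i; rewrite -/(hstring hb i).
  by move=> nn /orP [/eqP e|/eqP ->]; [| rewrite eqxx].
have [_ _ ba al] := HM1 (isT : act l) E.
move: P neqs; rewrite (str_rcons HM1 (isT : act l) E) => P neqs.
have Pa := prefix_rcons_lt P neqs.
have sz := size_prefix Pa.
rewrite drop_rcons // (hfield_br E) -(IH a al i Pa).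
set t := drop _ (hstring hb a).
have -> : [multinom count_mem j (rcons t b) | j < n] =
          ([multinom count_mem j t | j < n] + U_(b))%MM.
  apply/mnmP => j; rewrite mnmDE !mnmE -cats1 count_cat /= addn0.
  by rewrite eq_sym.
apply: nested_step => j bj; rewrite mnmE; apply/count_memPn; apply/negP => jt.
have : (j <= b)%N.
  apply: (behead_le E).
  have := @str_nil _ hb n i; rewrite -/(hstring hb i).
  move: jt; rewrite /t.
  case: (hstring hb i) => [|y u] jt' nn; first by elim: nn.
  move: jt'; case: (hstring hb a) => //= z v; exact: mem_drop.
by rewrite leqNgt bj.
Qed.

End Main.

Theorem proposition4p3 (R : realType) (r s n : nat)
  (hb : 'I_n -> option ('I_n * 'I_n)) (deg : 'I_n -> nat) :
  (2 <= r)%N -> (2 <= s)%N -> HallBasis r s n hb deg ->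
  forall c : 'I_n -> 'X_{1..n} -> 'I_n -> R,
  gen_struct_const hb c ->
  [/\ (forall (v : 'I_n -> R) (i l : 'I_n), hprec hb i l -> v l <> 0 ->
         exists alpha : 'X_{1..n}, Pcoef c v i alpha <> 0),
      (forall v : 'I_n -> R,
         (forall i : 'I_n, (i < r)%N -> forall alpha, Pcoef c v i alpha = 0) ->
         v = (fun _ => 0)) &
      (forall (v : 'I_n -> R) (i : 'I_n), Pcoef c v i 0%MM = v i)].
Proof.
move=> _ _ H c Hc.
have U : forall i alpha l, nested hb (hfield R hb i) alpha = hfield R hb l ->
    forall k, c i alpha k = (l == k)%:R.
  move=> i alpha l E k; rewrite (coef_unique H (Hc i alpha)) E.
  exact: (hconst R H l k).
have Pc : forall v i alpha l, nested hb (hfield R hb i) alpha = hfield R hb l ->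
    Pcoef c v i alpha = (-1) ^+ mdeg alpha / (mfact alpha)%:R * v l.
  move=> v i alpha l E; rewrite /Pcoef; congr (_ * _).
  rewrite (bigD1 l) //= big1 => [|k kl]; first by rewrite (U _ _ _ E) eqxx mul1r addr0.
  by rewrite (U _ _ _ E) eq_sym (negbTE kl) mul0r.
have nz : forall alpha : 'X_{1..n}, ((-1) ^+ mdeg alpha / (mfact alpha)%:R : R) != 0.
  move=> alpha; rewrite mulf_neq0 ?expf_neq0 ?oppr_eq0 ?oner_eq0 //.
  by rewrite invr_neq0 // pnatr_eq0 -lt0n mfact_gt0.
have M1 := HM1 H.
split.
- move=> v i l P vl.
  exists [multinom count_mem j (drop (size (hstring hb i)) (hstring hb l)) | j < n].
  rewrite (Pc v i _ l (nest_prefix R H P)).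
  by apply/eqP; rewrite mulf_neq0 ?nz //; apply/eqP.
- move=> v Hv; apply: functional_extensionality => l.
  have [c0 [t [sl [hc0 _]]]] := str_head M1 (isT : (fun _ => true) l).
  have c0r : (c0 < r)%N by move: H => [_ [Hgen _]]; apply/Hgen.
  have P : prefix (hstring hb c0) (hstring hb l).
    by rewrite (str_letter M1 (isT : (fun _ => true) c0) hc0) sl prefix_cons eqxx prefix0s.
  have := Hv c0 c0r
    [multinom count_mem j (drop (size (hstring hb c0)) (hstring hb l)) | j < n].
  rewrite (Pc v c0 _ l (nest_prefix R H P)) => /eqP.
  by rewrite mulf_eq0 (negbTE (nz _)) /= => /eqP.
- move=> v i; rewrite (Pc v i 0%MM i (nested0 _ _)) mdeg0 mfact0 expr0 divr1.
  by rewrite mul1r.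
Qed.
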